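(* Let $G$ be a graph on vertex set $\{1,\dots,N\}$ with independence number $\alpha(G)$; let $G_x$ be the set of neighbours of $x$ and $N_x=|G_x|$. In the equality problem defined by $G$, Alice receives $x$ and Bob receives $y$, with the promise that $x=y$ or $x\in G_y$; Bob outputs $z\in\{1,2\}$, and the success metric is $$\mathcal{S}(G)=\frac{1}{\sum_x N_x+N}\sum_{y=1}^N\Big(p(1|x=y,y)+\sum_{x\in G_y}p(2|x,y)\Big).$$ For a classical protocol with encoding $p_e(m|x)$ (messages $m$ from a finite set of arbitrary size) and decoding $p_d(z|y,m)$, so that $p(z|x,y)=\sum_m p_e(m|x)p_d(z|y,m)$, let $\mathcal{S}_C(G)$ be its success metric and $\mathcal{D}_C=\frac1N\sum_m\max_x p_e(m|x)$ its distinguishability. Then every classical protocol satisfies $$\frac{1}{N\alpha(G)}\Big(\big(\textstyle\sum_x N_x+N\big)\big(\mathcal{S}_C(G)-1\big)+N\Big)\le \mathcal{D}_C.$$ *)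

(* Defs.v *)
From HB Require Import structures.
From mathcomp Require Import all_boot all_order all_algebra.
Set Implicit Arguments. Unset Strict Implicit. Unset Printing Implicit Defensive.
Import Order.TTheory GRing.Theory Num.Theory.
Local Open Scope ring_scope.

Definition simple_graph (N : nat) (e : rel 'I_N) : Prop :=
  irreflexive e /\ symmetric e.

Definition nbhd (N : nat) (e : rel 'I_N) (x : 'I_N) : {set 'I_N} :=
  [set y | e x y].
Definition deg (N : nat) (e : rel 'I_N) (x : 'I_N) : nat := #|nbhd e x|.

Definition independent (N : nat) (e : rel 'I_N) (S : {set 'I_N}) : bool :=
  [forall x in S, forall y in S, ~~ e x y].
Definition indep_number (N : nat) (e : rel 'I_N) : nat :=
  \max_(S : {set 'I_N} | independent e S) #|S|.

(* Classical protocol: encoding pe x m = p_e(m|x), decoding pd y m z = p_d(z|y,m).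
   Outputs z in {1,2} are encoded as z : 'I_2, with index 0 <-> output 1 and
   index 1 <-> output 2. *)
Definition out1 : 'I_2 := ord0.
Definition out2 : 'I_2 := ord_max.

Definition encoding (R : realFieldType) (N : nat) (M : finType)
  (pe : 'I_N -> M -> R) : Prop :=
  (forall x m, 0 <= pe x m) /\ (forall x, \sum_m pe x m = 1).

Definition decoding (R : realFieldType) (N : nat) (M : finType)
  (pd : 'I_N -> M -> 'I_2 -> R) : Prop :=
  (forall y m z, 0 <= pd y m z) /\ (forall y m, \sum_z pd y m z = 1).

Definition pcl (R : realFieldType) (N : nat) (M : finType)
  (pe : 'I_N -> M -> R) (pd : 'I_N -> M -> 'I_2 -> R)
  (z : 'I_2) (x y : 'I_N) : R :=
  \sum_m pe x m * pd y m z.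

Definition success (R : realFieldType) (N : nat) (e : rel 'I_N) (M : finType)
  (pe : 'I_N -> M -> R) (pd : 'I_N -> M -> 'I_2 -> R) : R :=
  ((\sum_x (deg e x)%:R + N%:R)^-1) *
  \sum_y (pcl pe pd out1 y y + \sum_(x in nbhd e y) pcl pe pd out2 x y).

Definition distinguishability (R : realFieldType) (N : nat) (M : finType)
  (pe : 'I_N -> M -> R) : R :=
  (N%:R)^-1 * \sum_m \big[Num.max/0]_x pe x m.

(* Main.v *)
Require Import Defs.
From HB Require Import structures.
From mathcomp Require Import all_boot all_order all_algebra.
From mathcomp Require Import lra.
Import Order.TTheory GRing.Theory Num.Theory.
Local Open Scope ring_scope.

Lemma exch_nbhd (R : realFieldType) (N : nat) (e : rel 'I_N) (F : 'I_N -> 'I_N -> R) :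
  symmetric e ->
  \sum_y \sum_(x in nbhd e y) F x y = \sum_x \sum_(y in nbhd e x) F x y.
Proof.
move=> se.
rewrite (eq_bigr (fun y => \sum_x if e y x then F x y else 0)); last first.
  by move=> y _; rewrite big_mkcond; apply: eq_bigr => x _; rewrite inE.
rewrite exchange_big /=.
under [RHS]eq_bigr do rewrite big_mkcond.
apply: eq_bigr => x _; apply: eq_bigr => y _; by rewrite inE se.
Qed.

Lemma key (R : realFieldType) (N : nat) (e : rel 'I_N) (p d : 'I_N -> R) (P : R) :
  symmetric e -> (forall x, 0 <= p x) -> (forall x, p x <= P) -> 0 <= P ->
  (forall y, 0 <= d y) -> (forall y, d y <= 1) ->
  \sum_y d y * (p y - \sum_(x in nbhd e y) p x) <= (indep_number e)%:R * P.
Proof.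
move=> se p0 pP P0 d0 d1.
set c := fun x => d x - \sum_(y in nbhd e x) d y.
have -> : \sum_y d y * (p y - \sum_(x in nbhd e y) p x) = \sum_x p x * c x.
  under eq_bigr do rewrite mulrBr mulr_sumr.
  rewrite sumrB exch_nbhd //.
  under [RHS]eq_bigr do rewrite /c mulrBr mulr_sumr.
  rewrite sumrB; congr (_ - _).
    by apply: eq_bigr => x _; rewrite mulrC.
  by apply: eq_bigr => x _; apply: eq_bigr => y _; rewrite mulrC.
set Q := [set x | 0 < c x].
apply: (@le_trans _ _ (\sum_x (if x \in Q then P * c x else 0))).
  apply: ler_sum => x _; rewrite inE; case: ifP => hc.
    by apply: ler_wpM2r; [apply: ltW|].
  by apply: mulr_ge0_le0; [|rewrite leNgt hc].
have -> : \sum_x (if x \in Q then P * c x else 0) = P * \sum_x (if x \in Q then c x else 0).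
  by rewrite mulr_sumr; apply: eq_bigr => x _; case: ifP; rewrite ?mulr0.
rewrite mulrC; apply: ler_wpM2r => //.
set k := fun y => #|[set x in Q | e y x]|.
set I := [set y in Q | k y == 0%N].
have Iind : independent e I.
  apply/forallP => x; apply/implyP => xI; apply/forallP => y; apply/implyP => yI.
  apply/negP => exy.
  move: xI; rewrite inE => /andP [_ /eqP]; rewrite /k => /eqP.
  rewrite cards_eq0 => /eqP S0.
  have : y \in [set x0 in Q | e x x0] by rewrite inE exy andbT; move: yI; rewrite inE => /andP[].
  by rewrite S0 inE.
apply: (@le_trans _ _ (#|I|%:R)); last first.
  rewrite ler_nat /indep_number.
  exact: (@leq_bigmax_cond _ (fun S : {set 'I_N} => independent e S) (fun S : {set 'I_N} => #|S|) I Iind).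
apply: (@le_trans _ _ (\sum_x ((if x \in Q then d x else 0) -
     \sum_y (if (x \in Q) && (y \in Q) && e x y then d y else 0)))).
  apply: ler_sum => x _; case: ifP => xQ; last by rewrite big1 ?subr0.
  rewrite /c lerD2l lerN2 [X in _ <= X]big_mkcond; apply: ler_sum => y _.
  rewrite !inE; case: (0 < c y); case: (e x y) => /=; rewrite ?lexx ?d0 //.
rewrite sumrB exchange_big -sumrB.
apply: (@le_trans _ _ (\sum_y (if y \in I then 1 else 0))); last first.
  by rewrite -big_mkcond sumr_const.
apply: ler_sum => y _.
case: ifP => yQ; last first.
  rewrite big1 ?subr0; first by rewrite /I inE yQ.
  by move=> x _; rewrite andbF.
have -> : \sum_x (if (x \in Q) && true && e x y then d y else 0) = d y * (k y)%:R.
  rewrite (eq_bigr (fun x => if x \in [set x in Q | e y x] then d y else 0)); last first.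
    by move=> x _; rewrite !inE andbT se.
  by rewrite -big_mkcond sumr_const mulr_natr.
rewrite inE yQ /=; case: eqP => [->|/eqP kn0]; first by rewrite mulr0 subr0.
have k1 : 1 <= (k y)%:R :> R by rewrite ler1n lt0n.
have := d0 y; nra.
Qed.

Theorem theorem3 (R : realFieldType) (N : nat) (e : rel 'I_N) (M : finType)
  (pe : 'I_N -> M -> R) (pd : 'I_N -> M -> 'I_2 -> R) :
  (0 < N)%N -> simple_graph e -> encoding pe -> decoding pd ->
  ((N * indep_number e)%:R)^-1 *
    ((\sum_x (deg e x)%:R + N%:R) * (success e pe pd - 1) + N%:R)
  <= distinguishability pe.
Proof.
move=> N0 [irr se] [pe0 pe1] [pd0 pd1].
set A := \sum_x (deg e x)%:R.
set T := \sum_y (pcl pe pd out1 y y + \sum_(x in nbhd e y) pcl pe pd out2 x y).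
have A0 : 0 <= A by apply: sumr_ge0 => x _; apply: ler0n.
have D0 : A + N%:R != 0.
  by rewrite gt_eqF // ltr_wpDl // ltr0n.
have al : (0 < indep_number e)%N.
  pose x0 : 'I_N := Ordinal N0.
  have ind : independent e [set x0].
    apply/forallP => x; apply/implyP; rewrite inE => /eqP ->.
    apply/forallP => y; apply/implyP; rewrite inE => /eqP ->.
    by rewrite irr.
  apply: (leq_trans _ (@leq_bigmax_cond _ (fun S : {set 'I_N} => independent e S) (fun S : {set 'I_N} => #|S|) _ ind)).
  by rewrite cards1.
have HS : (A + N%:R) * (success e pe pd - 1) + N%:R = T - A.
  rewrite /success -/A -/T mulrBr mulrA mulfV // mul1r mulr1.
  by rewrite opprD addrA addrNK.
have H12 : forall y m, pd y m out2 = 1 - pd y m out1.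
  move=> y m; rewrite -(pd1 y m) big_ord_recr big_ord1 /=.
  have -> : widen_ord (leqnSn 1) ord0 = out1 by apply: val_inj.
  by rewrite addrC addrK.
have HT : T - A = \sum_m \sum_y pd y m out1 * (pe y m - \sum_(x in nbhd e y) pe x m).
  have E2 : forall x y, pcl pe pd out2 x y = 1 - \sum_m pe x m * pd y m out1.
    move=> x y; rewrite /pcl -(pe1 x) -sumrB; apply: eq_bigr => m _.
    by rewrite H12 mulrBr mulr1.
  rewrite /T /A.
  under eq_bigr => y _.
    under eq_bigr => x _ do rewrite E2.
    rewrite sumrB sumr_const.
  over.
  rewrite exchange_big -sumrB; apply: eq_bigr => y _.
  rewrite /deg /pcl.
  set a := \sum_m pe y m * pd y m out1.
  set b := \sum_(i in nbhd e y) \sum_m pe i m * pd y m out1.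
  set k := (#|nbhd e y|%:R : R).
  have -> : a + (k - b) - k = a - b by rewrite addrCA addrC addrK.
  under [RHS]eq_bigr do rewrite mulrBr mulr_sumr.
  rewrite sumrB /a /b; congr (_ - _).
    by apply: eq_bigr => m _; rewrite mulrC.
  rewrite exchange_big; apply: eq_bigr => m _; apply: eq_bigr => x _.
  by rewrite mulrC.
rewrite HS HT /distinguishability.
have x0 : 'I_N := Ordinal N0.
have Hk : \sum_m \sum_y pd y m out1 * (pe y m - \sum_(x in nbhd e y) pe x m)
    <= (indep_number e)%:R * \sum_m \big[Num.max/0]_x pe x m.
  rewrite mulr_sumr; apply: ler_sum => m _; apply: key.
  - exact: se.
  - by move=> x; exact: pe0.
  - by move=> x; exact: le_bigmax.
  - exact: le_trans (pe0 x0 m) (le_bigmax _ _ _).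
  - by move=> y; exact: pd0.
  - by move=> y; rewrite -subr_ge0 -H12.
rewrite natrM invfM -mulrA ler_wpM2l ?invr_ge0 ?ler0n //.
rewrite ler_pdivrMl ?ltr0n //.
Qed.
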